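(* For $v>0$ and $\tau\in\mathbb R$, \[ |\lambda(\tfrac12+i\tau,v)|\le\min\big(4,\,2\sqrt v/(|\tau|-v)\big)\quad\text{if }|\tau|>v, \] \[ |\Lambda(\tfrac12+i\tau,v)|\le\min\big(4,\,2\sqrt v/(v-|\tau|)\big)\quad\text{if }|\tau|<v. \]
   Context: For $v>0$ and $0<\Re s<1$: $\lambda(s,v)=\int_0^v e^{it}t^{s-1}\,dt$ and $\Lambda(s,v)=\int_v^\infty e^{it}t^{s-1}\,dt$ (improper integral). *)

(* Defs.v *)
From Stdlib Require Import Reals.
From Coquelicot Require Import Coquelicot.
Open Scope R_scope.

Definition cexp (z : C) : C :=
  (exp (Re z) * cos (Im z), exp (Re z) * sin (Im z)).

Definition cpow (t : R) (z : C) : C := cexp (Cmult z (RtoC (ln t))).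

Definition lam_integrand (s : C) (t : R) : C :=
  Cmult (cexp (Cmult Ci (RtoC t))) (cpow t (Cminus s (RtoC 1))).

Definition is_lambda (s : C) (v : R) (l : C) : Prop :=
  is_RInt_gen (V := C_R_NormedModule) (lam_integrand s) (at_right 0) (at_point v) l.

Definition is_Lambda (s : C) (v : R) (l : C) : Prop :=
  is_RInt_gen (V := C_R_NormedModule) (lam_integrand s) (at_point v) (Rbar_locally p_infty) l.

(* Main.v *)
Require Import Defs.
From Stdlib Require Import Reals Lra.
From Coquelicot Require Import Coquelicot.
Open Scope R_scope.

Definition phi (tau t : R) := t + tau * ln t.
Definition gg (tau t : R) := sqrt t / (t + tau).
Definition dg (tau t : R) := (tau - t) / (2 * sqrt t * (t + tau)^2).

Lemma lam_eq tau t : 0 < t ->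
  lam_integrand ((1/2, tau) : C) t = (cos (phi tau t) / sqrt t, sin (phi tau t) / sqrt t).
Proof.
  intros ht.
  unfold lam_integrand, cexp, cpow, Cmult, Cminus, Cplus, Copp, Ci, RtoC, Re, Im; simpl.
  assert (E : exp (/2 * ln t) = sqrt t) by (rewrite <- Rpower_sqrt; auto).
  assert (sqrt t <> 0) by (apply Rgt_not_eq, sqrt_lt_R0; auto).
  replace (exp ((1 / 2 + - (1)) * ln t - (tau + - 0) * 0)) with (/ sqrt t)
    by (rewrite <- E, <- exp_Ropp; f_equal; field).
  replace ((1 / 2 + - (1)) * 0 + (tau + - 0) * ln t) with (tau * ln t) by ring.
  replace (0 * t - 1 * 0) with 0 by ring.
  replace (0 * 0 + 1 * t) with t by ring.
  rewrite exp_0. unfold phi. rewrite cos_plus, sin_plus.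
  f_equal; field; auto.
Qed.

Definition f1 tau t := cos (phi tau t) / sqrt t.
Definition f2 tau t := sin (phi tau t) / sqrt t.
Definition K1 tau t := gg tau t * sin (phi tau t).
Definition K2 tau t := - (gg tau t * cos (phi tau t)).
Definition R1 tau t := dg tau t * sin (phi tau t).
Definition R2 tau t := - (dg tau t * cos (phi tau t)).

Lemma K1_der tau t : 0 < t -> t + tau <> 0 -> is_derive (K1 tau) t (R1 tau t + f1 tau t).
Proof.
  intros ht hn. unfold K1, R1, f1, gg, dg, phi.
  auto_derive.
  - repeat split; auto.
  - assert (sqrt t <> 0) by (apply Rgt_not_eq, sqrt_lt_R0; auto).
    assert (sqrt t * sqrt t = t) by (apply sqrt_sqrt; lra).
    set (C := cos _). set (S := sin _). set (s := sqrt t) in *.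
    clearbody C S s. subst t. field. repeat split; auto.
Qed.

Ltac sqsub t :=
  assert (sqrt t <> 0) by (apply Rgt_not_eq, sqrt_lt_R0; auto);
  assert (sqrt t * sqrt t = t) by (apply sqrt_sqrt; lra);
  set (s := sqrt t) in *; clearbody s; subst t.

Lemma K2_der tau t : 0 < t -> t + tau <> 0 -> is_derive (K2 tau) t (R2 tau t + f2 tau t).
Proof.
  intros ht hn. unfold K2, R2, f2, gg, dg, phi.
  auto_derive.
  - repeat split; auto.
  - set (C := cos _). set (S := sin _). clearbody C S. sqsub t. field. auto.
Qed.

Lemma gg_der tau t : 0 < t -> t + tau <> 0 -> is_derive (gg tau) t (dg tau t).
Proof.
  intros ht hn. unfold gg, dg.
  auto_derive.
  - repeat split; auto.
  - sqsub t. field. auto.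
Qed.

Lemma sq_der t : 0 < t -> is_derive (fun t => 2 * sqrt t) t (/ sqrt t).
Proof.
  intros ht. auto_derive.
  - auto.
  - sqsub t. field. auto.
Qed.

Ltac side t := 
  let Hs := fresh in assert (Hs : 0 < sqrt t) by (apply sqrt_lt_R0; auto);
  repeat split; auto; try lra;
  repeat match goal with |- _ * _ <> 0 => apply Rmult_integral_contrapositive_currified end;
  auto; lra.
Lemma cont_R1 tau t : 0 < t -> t + tau <> 0 -> continuous (R1 tau) t.
Proof. intros. apply (@ex_derive_continuous R_AbsRing R_NormedModule). unfold R1, dg, phi. auto_derive.
  side t. Qed.
Lemma cont_R2 tau t : 0 < t -> t + tau <> 0 -> continuous (R2 tau) t.
Proof. intros. apply (@ex_derive_continuous R_AbsRing R_NormedModule). unfold R2, dg, phi. auto_derive.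
  side t. Qed.
Lemma cont_f1 tau t : 0 < t -> continuous (f1 tau) t.
Proof. intros. apply (@ex_derive_continuous R_AbsRing R_NormedModule). unfold f1, phi. auto_derive.
  side t. Qed.
Lemma cont_f2 tau t : 0 < t -> continuous (f2 tau) t.
Proof. intros. apply (@ex_derive_continuous R_AbsRing R_NormedModule). unfold f2, phi. auto_derive.
  side t. Qed.
Lemma cont_dg tau t : 0 < t -> t + tau <> 0 -> continuous (dg tau) t.
Proof. intros. apply (@ex_derive_continuous R_AbsRing R_NormedModule). unfold dg. auto_derive.
  side t. Qed.
Lemma cont_isq t : 0 < t -> continuous (fun t => / sqrt t) t.
Proof. intros. apply (@ex_derive_continuous R_AbsRing R_NormedModule). auto_derive.
  side t. Qed.

Lemma Cmod_pol g th : Cmod (g * sin th, - (g * cos th)) = Rabs g.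
Proof.
  unfold Cmod; cbn [fst snd].
  replace ((g * sin th) ^ 2 + (- (g * cos th)) ^ 2) with (g ^ 2)
    by (assert (E := sin2_cos2 th); unfold Rsqr in E;
        symmetry; transitivity (g ^ 2 * (sin th * sin th + cos th * cos th)); [ring| rewrite E; ring]).
  rewrite <- sqrt_Rsqr_abs. unfold Rsqr. f_equal; ring.
Qed.

Lemma comp_int tau a b (K F R : R -> R) :
  0 < a -> a <= b -> (forall t, a <= t <= b -> t + tau <> 0) ->
  (forall t, 0 < t -> t + tau <> 0 -> is_derive K t (R t + F t)) ->
  (forall t, 0 < t -> t + tau <> 0 -> continuous R t) ->
  (forall t, 0 < t -> continuous F t) ->
  ex_RInt R a b /\ is_RInt F a b (K b - K a - RInt R a b).
Proof.
  intros ha hab hn HK HR HF.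
  assert (Hm : forall t, Rmin a b <= t <= Rmax a b -> 0 < t /\ t + tau <> 0).
  { intros t Ht. rewrite Rmin_left, Rmax_right in Ht by lra. split; [lra| apply hn; lra]. }
  assert (ER : ex_RInt R a b).
  { apply (@ex_RInt_continuous R_CompleteNormedModule). intros z Hz.
    destruct (Hm z Hz). apply HR; auto. }
  split; auto.
  assert (H1 := is_RInt_derive K (fun t => R t + F t) a b
     (fun x Hx => HK x (proj1 (Hm x Hx)) (proj2 (Hm x Hx)))).
  assert (H2 : is_RInt (fun t => R t + F t) a b (minus (K b) (K a))).
  { apply H1. intros x Hx. destruct (Hm x Hx).
    apply (@continuous_plus R_UniformSpace R_AbsRing R_NormedModule); auto. }
  assert (H3 := is_RInt_minus _ _ _ _ _ _ H2 (RInt_correct _ _ _ ER)).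
  apply is_RInt_ext with (f := fun t => minus (R t + F t) (R t)).
  { intros; unfold minus, plus, opp; simpl; ring. }
  exact H3.
Qed.

Lemma nR (x : R) : @norm R_AbsRing R_NormedModule x = Rabs x.
Proof. reflexivity. Qed.
Lemma normCR (x : Complex.C) : @norm R_AbsRing C_R_NormedModule x = Cmod x.
Proof. destruct x as [p q]. unfold Cmod.
  unfold norm at 1. simpl. unfold prod_norm. cbn [fst snd]. rewrite (nR p), (nR q).
  rewrite (pow2_abs p), (pow2_abs q). reflexivity.
Qed.

Lemma ibp tau a b : 0 < a -> a <= b -> (forall t, a <= t <= b -> t + tau <> 0) ->
  ((forall t, a <= t <= b -> 0 <= dg tau t) \/ (forall t, a <= t <= b -> dg tau t <= 0)) ->
  exists I : C, is_RInt (V := C_R_NormedModule) (lam_integrand ((1/2, tau) : C)) a b I /\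
    Cmod I <= Rabs (gg tau a) + Rabs (gg tau b) + Rabs (gg tau b - gg tau a).
Proof.
  intros ha hab hn hs.
  destruct (comp_int tau a b (K1 tau) (f1 tau) (R1 tau) ha hab hn
     (K1_der tau) (cont_R1 tau) (cont_f1 tau)) as [E1 I1].
  destruct (comp_int tau a b (K2 tau) (f2 tau) (R2 tau) ha hab hn
     (K2_der tau) (cont_R2 tau) (cont_f2 tau)) as [E2 I2].
  set (IR := (RInt (R1 tau) a b, RInt (R2 tau) a b) : C).
  exists (K1 tau b - K1 tau a - RInt (R1 tau) a b, K2 tau b - K2 tau a - RInt (R2 tau) a b).
  split.
  - assert (HP : @is_RInt (prod_NormedModule R_AbsRing R_NormedModule R_NormedModule)
       (fun t => (f1 tau t, f2 tau t)) a b
       (K1 tau b - K1 tau a - RInt (R1 tau) a b, K2 tau b - K2 tau a - RInt (R2 tau) a b)).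
    { apply is_RInt_fct_extend_pair; simpl; auto. }
    apply (@is_RInt_ext C_R_NormedModule (fun t => (f1 tau t, f2 tau t))).
    { intros x Hx. rewrite Rmin_left, Rmax_right in Hx by lra.
      rewrite lam_eq by lra. reflexivity. }
    exact HP.
  -
    assert (HIR : is_RInt (V := C_R_NormedModule) (fun t => (R1 tau t, R2 tau t)) a b IR).
    { assert (HP : @is_RInt (prod_NormedModule R_AbsRing R_NormedModule R_NormedModule)
       (fun t => (R1 tau t, R2 tau t)) a b IR).
      { apply is_RInt_fct_extend_pair; simpl; apply (@RInt_correct R_CompleteNormedModule); auto. }
      exact HP. }
    assert (Hm : forall t, Rmin a b <= t <= Rmax a b -> 0 < t /\ t + tau <> 0).
    { intros t Ht. rewrite Rmin_left, Rmax_right in Ht by lra. split; [lra| apply hn; lra]. }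
    assert (Hd := is_RInt_derive (gg tau) (dg tau) a b
       (fun x Hx => gg_der tau x (proj1 (Hm x Hx)) (proj2 (Hm x Hx)))
       (fun x Hx => cont_dg tau x (proj1 (Hm x Hx)) (proj2 (Hm x Hx)))).
    assert (Hg : exists w, is_RInt (fun t => Rabs (dg tau t)) a b w /\
                  w <= Rabs (gg tau b - gg tau a)).
    { destruct hs as [hs|hs].
      - exists (minus (gg tau b) (gg tau a)). split.
        + apply (@is_RInt_ext R_NormedModule (dg tau)); auto.
          intros x Hx. rewrite Rmin_left, Rmax_right in Hx by lra.
          rewrite Rabs_pos_eq; auto. apply hs; lra.
        + apply Rle_abs.
      - exists (opp (minus (gg tau b) (gg tau a))). split.
        + apply (is_RInt_ext (fun t => opp (dg tau t))); [|apply (@is_RInt_opp R_NormedModule); auto].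
          intros x Hx. rewrite Rmin_left, Rmax_right in Hx by lra.
          rewrite Rabs_left1; auto. apply hs; lra.
        + unfold opp, minus, plus, opp; simpl. rewrite <- Rabs_Ropp. apply Rle_abs. }
    destruct Hg as [w [Hw Hwle]].
    assert (HN : @norm R_AbsRing C_R_NormedModule IR <= w).
    { apply (norm_RInt_le (fun t => (R1 tau t, R2 tau t)) (fun t => Rabs (dg tau t)) a b IR w hab);
        auto.
      intros x _. rewrite normCR. unfold R1, R2. rewrite Cmod_pol. lra. }
    rewrite normCR in HN.
    replace (K1 tau b - K1 tau a - RInt (R1 tau) a b, K2 tau b - K2 tau a - RInt (R2 tau) a b)
      with (Cplus (Cplus (K1 tau b, K2 tau b) (Copp (K1 tau a, K2 tau a))) (Copp IR))
      by (unfold Cplus, Copp, IR; simpl; f_equal; ring).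
    eapply Rle_trans; [apply Cmod_triangle|].
    rewrite Cmod_opp.
    eapply Rle_trans; [apply Rplus_le_compat_r, Cmod_triangle|].
    rewrite Cmod_opp. unfold K1, K2. rewrite !Cmod_pol. lra.
Qed.

Lemma frac_le x y z w : 0 < y -> 0 < w -> x * w <= z * y -> x / y <= z / w.
Proof.
  intros hy hw h.
  replace (x / y) with ((x * w) * / (y * w)) by (field; lra).
  replace (z / w) with ((z * y) * / (y * w)) by (field; lra).
  apply Rmult_le_compat_r; auto. left; apply Rinv_0_lt_compat, Rmult_lt_0_compat; auto.
Qed.

Lemma sum3 x y : (0 <= x <= y \/ y <= x <= 0) -> Rabs x + Rabs y + Rabs (y - x) = 2 * Rabs y.
Proof.
  intros [[h1 h2]|[h1 h2]].
  - rewrite !Rabs_pos_eq; lra.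
  - rewrite !Rabs_left1; lra.
Qed.

Lemma sqrt_pos' t : 0 < t -> 0 < sqrt t.
Proof. apply sqrt_lt_R0. Qed.

Lemma gmono_lam tau a b : 0 < a -> a <= b -> b < Rabs tau ->
  (0 <= gg tau a <= gg tau b) \/ (gg tau b <= gg tau a <= 0).
Proof.
  intros ha hab hb. unfold gg.
  assert (Hs := sqrt_pos' a ha). assert (Hu := sqrt_pos' b ltac:(lra)).
  assert (Hsu : sqrt a <= sqrt b) by (apply sqrt_le_1; lra).
  assert (Ea := sqrt_sqrt a ltac:(lra)). assert (Eb := sqrt_sqrt b ltac:(lra)).
  destruct (Rle_or_lt 0 tau) as [ht|ht].
  - rewrite Rabs_pos_eq in hb by lra. left. split.
    + apply Rdiv_le_0_compat; lra.
    + apply frac_le; try lra.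
      set (s := sqrt a) in *. set (u := sqrt b) in *. clearbody s u. subst a b.
      assert (0 <= (u - s) * (tau - s*u)) by (apply Rmult_le_pos; nra). nra.
  - rewrite Rabs_left in hb by lra. right.
    replace (sqrt b / (b + tau)) with (- (sqrt b / (- tau - b))) by (field; lra).
    replace (sqrt a / (a + tau)) with (- (sqrt a / (- tau - a))) by (field; lra).
    split.
    + apply Ropp_le_contravar, frac_le; try lra. nra.
    + assert (0 <= sqrt a / (- tau - a)) by (apply Rdiv_le_0_compat; lra). lra.
Qed.

Lemma gb_lam tau b : 0 < b -> b < Rabs tau -> Rabs (gg tau b) <= sqrt b / (Rabs tau - b).
Proof.
  intros hb hT. unfold gg. assert (Hu := sqrt_pos' b hb).
  assert (E : exists y, Rabs (b + tau) = y /\ Rabs tau - b <= y).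
  { destruct (Rle_or_lt 0 tau); [rewrite (Rabs_pos_eq tau) in *|rewrite (Rabs_left tau) in *]; try lra.
    + exists (b + tau). rewrite Rabs_pos_eq; lra.
    + exists (- (b + tau)). rewrite Rabs_left; lra. }
  destruct E as [y [Ey Hy]].
  assert (b + tau <> 0) by (intro Z; rewrite Z, Rabs_R0 in Ey; lra).
  rewrite Rabs_div by auto. rewrite Ey.
  rewrite (Rabs_pos_eq (sqrt b)) by lra.
  apply frac_le; try lra. apply Rmult_le_compat_l; lra.
Qed.

Lemma gmono_Lam tau a b : Rabs tau < a -> a <= b ->
  0 <= gg tau b <= gg tau a.
Proof.
  intros ha hab. unfold gg.
  assert (HT : - a < tau < a) by (destruct (Rle_or_lt 0 tau); [rewrite Rabs_pos_eq in ha|rewrite Rabs_left in ha]; lra).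
  assert (a0 : 0 < a) by (pose proof (Rabs_pos tau); lra).
  assert (Hs := sqrt_pos' a a0). assert (Hu := sqrt_pos' b ltac:(lra)).
  assert (Hsu : sqrt a <= sqrt b) by (apply sqrt_le_1; lra).
  assert (Ea := sqrt_sqrt a ltac:(lra)). assert (Eb := sqrt_sqrt b ltac:(lra)).
  split.
  - apply Rdiv_le_0_compat; lra.
  - apply frac_le; try lra.
    set (s := sqrt a) in *. set (u := sqrt b) in *. clearbody s u. subst a b.
    assert (0 <= (u - s) * (s*u - tau)) by (apply Rmult_le_pos; nra). nra.
Qed.

Lemma ga_Lam tau a : Rabs tau < a -> gg tau a <= sqrt a / (a - Rabs tau).
Proof.
  intros ha. unfold gg.
  assert (HT : - a < tau < a) by (destruct (Rle_or_lt 0 tau); [rewrite Rabs_pos_eq in ha|rewrite Rabs_left in ha]; lra).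
  assert (a0 : 0 < a) by (pose proof (Rabs_pos tau); lra).
  assert (Hs := sqrt_pos' a a0).
  apply frac_le; try lra. apply Rmult_le_compat_l; try lra.
  destruct (Rle_or_lt 0 tau); [rewrite Rabs_pos_eq|rewrite Rabs_left]; lra.
Qed.

Lemma dg_sign tau t : 0 < t -> t + tau <> 0 ->
  (0 <= tau - t -> 0 <= dg tau t) /\ (tau - t <= 0 -> dg tau t <= 0).
Proof.
  intros ht hn. unfold dg. assert (Hs := sqrt_pos' t ht).
  assert (0 < 2 * sqrt t * (t + tau) ^ 2).
  { apply Rmult_lt_0_compat; [lra|]. replace ((t+tau)^2) with (Rsqr (t+tau)) by (unfold Rsqr; ring). apply Rlt_0_sqr; auto. }
  split; intros h.
  - apply Rdiv_le_0_compat; lra.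
  - unfold Rdiv. rewrite <- (Ropp_involutive (tau - t)), Ropp_mult_distr_l_reverse.
    apply Ropp_le_cancel. rewrite Ropp_involutive, Ropp_0.
    apply Rmult_le_pos; [lra|]. left; apply Rinv_0_lt_compat; auto.
Qed.

Definition FF tau := lam_integrand ((1/2, tau) : C).

Lemma bnd_lam tau a b : 0 < a -> a <= b -> b < Rabs tau ->
  exists I, is_RInt (V := C_R_NormedModule) (FF tau) a b I /\ Cmod I <= 2 * sqrt b / (Rabs tau - b).
Proof.
  intros ha hab hb.
  assert (hn : forall t, a <= t <= b -> t + tau <> 0).
  { intros t Ht. destruct (Rle_or_lt 0 tau); [rewrite Rabs_pos_eq in hb|rewrite Rabs_left in hb]; lra. }
  destruct (ibp tau a b ha hab hn) as [I [HI HB]].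
  { destruct (Rle_or_lt 0 tau); [rewrite Rabs_pos_eq in hb|rewrite Rabs_left in hb]; try lra.
    - left. intros t Ht. apply (dg_sign tau t); [lra| apply hn; auto| lra].
    - right. intros t Ht. apply (dg_sign tau t); [lra| apply hn; auto| lra]. }
  exists I. split; auto.
  rewrite sum3 in HB by (apply gmono_lam; lra).
  assert (G := gb_lam tau b ltac:(lra) hb). unfold Rdiv in *. lra.
Qed.

Lemma bnd_Lam tau a b : Rabs tau < a -> a <= b ->
  exists I, is_RInt (V := C_R_NormedModule) (FF tau) a b I /\ Cmod I <= 2 * sqrt a / (a - Rabs tau).
Proof.
  intros ha hab.
  assert (HT : - a < tau < a) by (destruct (Rle_or_lt 0 tau); [rewrite Rabs_pos_eq in ha|rewrite Rabs_left in ha]; lra).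
  assert (a0 : 0 < a) by (pose proof (Rabs_pos tau); lra).
  assert (hn : forall t, a <= t <= b -> t + tau <> 0) by (intros; lra).
  destruct (ibp tau a b a0 hab hn) as [I [HI HB]].
  { right. intros t Ht. apply (dg_sign tau t); [lra| apply hn; auto| lra]. }
  exists I. split; auto.
  assert (M := gmono_Lam tau a b ha hab).
  rewrite (Rabs_pos_eq (gg tau a)), (Rabs_pos_eq (gg tau b)), Rabs_left1 in HB by lra.
  assert (G := ga_Lam tau a ha). unfold Rdiv in *. lra.
Qed.

Lemma Cmod_F tau t : 0 < t -> Cmod (FF tau t) = / sqrt t.
Proof.
  intros ht. unfold FF. rewrite lam_eq by auto. unfold Cmod; cbn [fst snd].
  assert (Hs := sqrt_pos' t ht).
  replace ((cos (phi tau t) / sqrt t) ^ 2 + (sin (phi tau t) / sqrt t) ^ 2) with ((/ sqrt t) ^ 2).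
  - apply sqrt_pow2. left; apply Rinv_0_lt_compat; auto.
  - assert (E := sin2_cos2 (phi tau t)); unfold Rsqr in E.
    symmetry; transitivity ((/ sqrt t) ^ 2 * (sin (phi tau t) * sin (phi tau t) + cos (phi tau t) * cos (phi tau t))).
    + field; lra.
    + rewrite E; ring.
Qed.

Lemma triv tau a b I : 0 < a -> a <= b -> is_RInt (V := C_R_NormedModule) (FF tau) a b I ->
  Cmod I <= 2 * sqrt b - 2 * sqrt a.
Proof.
  intros ha hab HI.
  assert (Hm : forall t, Rmin a b <= t <= Rmax a b -> 0 < t).
  { intros t Ht. rewrite Rmin_left, Rmax_right in Ht by lra. lra. }
  assert (Hd := is_RInt_derive (fun t => 2 * sqrt t) (fun t => / sqrt t) a b
       (fun x Hx => sq_der x (Hm x Hx)) (fun x Hx => cont_isq x (Hm x Hx))).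
  rewrite <- normCR.
  eapply Rle_trans.
  apply (norm_RInt_le (V := C_R_NormedModule) (FF tau) (fun t => / sqrt t) a b I _ hab); auto.
  - intros x Hx. rewrite normCR, Cmod_F by lra. lra.
  - apply Hd.
  - unfold minus, plus, opp; simpl. lra.
Qed.

Lemma minus_plus_C (x y : C_R_NormedModule) : minus (plus x y) y = x.
Proof. destruct x as [a b], y as [c d].
  apply injective_projections; simpl; unfold plus, opp; simpl; ring. Qed.

Lemma gen_left tau v l (h : R -> C) :
  at_right 0 (fun a => is_RInt (V := C_R_NormedModule) (FF tau) a v (h a)) ->
  filterlim h (at_right 0) (@locally (NormedModule.UniformSpace _ C_R_NormedModule) l) ->
  is_RInt_gen (V := C_R_NormedModule) (FF tau) (at_right 0) (at_point v) l.
Proof.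
  intros H1 H2. unfold is_RInt_gen.
  apply (filterlimi_lim_ext_loc (fun ab : R * R => h (fst ab))).
  - apply (Filter_prod _ _ _ (fun a => is_RInt (V := C_R_NormedModule) (FF tau) a v (h a)) (fun b => b = v)); auto.
    + reflexivity.
    + intros x y Hx Hy. subst y. exact Hx.
  - eapply filterlim_comp; [apply filterlim_fst | exact H2].
Qed.

Lemma gen_right tau v l (h : R -> C) :
  Rbar_locally p_infty (fun b => is_RInt (V := C_R_NormedModule) (FF tau) v b (h b)) ->
  filterlim h (Rbar_locally p_infty) (@locally (NormedModule.UniformSpace _ C_R_NormedModule) l) ->
  is_RInt_gen (V := C_R_NormedModule) (FF tau) (at_point v) (Rbar_locally p_infty) l.
Proof.
  intros H1 H2. unfold is_RInt_gen.
  apply (filterlimi_lim_ext_loc (fun ab : R * R => h (snd ab))).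
  - apply (Filter_prod _ _ _ (fun a => a = v) (fun b => is_RInt (V := C_R_NormedModule) (FF tau) v b (h b))); auto.
    + reflexivity.
    + intros x y Hx Hy. subst x. exact Hy.
  - eapply filterlim_comp; [apply filterlim_snd | exact H2].
Qed.

Lemma lim_bound {T} (F : (T -> Prop) -> Prop) {FF : ProperFilter F} (h : T -> C) l B :
  filterlim h F (@locally (NormedModule.UniformSpace _ C_R_NormedModule) l) ->
  F (fun x => Cmod (h x) <= B) -> Cmod l <= B.
Proof.
  intros H1 H2.
  destruct (Rle_or_lt (Cmod l) B) as [|Hlt]; auto. exfalso.
  assert (He : 0 < Cmod l - B) by lra.
  apply (proj1 (@filterlim_locally_ball_norm R_AbsRing T C_R_NormedModule F _ h l)) with (eps := mkposreal _ He) in H1.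
  destruct (filter_ex _ (filter_and _ _ H1 H2)) as [x [Hx1 Hx2]].
  unfold ball_norm in Hx1; simpl in Hx1.
  assert (Ht := norm_triangle_inv (V := C_R_NormedModule) (h x) l).
  rewrite !normCR in Ht.
  assert (Ha := Rle_abs (Cmod l - Cmod (h x))).
  rewrite Rabs_minus_sym in Ha. rewrite normCR in Hx1. lra.
Qed.

Lemma minus_plus_C' (x y : C_R_NormedModule) : minus (plus y x) y = x.
Proof. destruct x as [a b], y as [c d].
  apply injective_projections; simpl; unfold plus, opp; simpl; ring. Qed.

Lemma norm_plus_C (x y : C_R_NormedModule) : Cmod (plus x y) <= Cmod x + Cmod y.
Proof. rewrite <- !normCR. apply norm_triangle. Qed.

Lemma ev_right c : 0 < c -> at_right 0 (fun a => 0 < a < c).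
Proof.
  intros hc. exists (mkposreal c hc). intros y Hy Hp. split; auto.
  unfold ball in Hy; simpl in Hy. unfold AbsRing_ball, abs, minus, plus, opp in Hy; simpl in Hy.
  rewrite Ropp_0, Rplus_0_r in Hy. apply Rabs_lt_between in Hy. lra.
Qed.

Definition hl tau v a := @RInt C_R_CompleteNormedModule (FF tau) a v.

Lemma hl_is tau v a : 0 < a <= v -> v < Rabs tau ->
  is_RInt (V := C_R_NormedModule) (FF tau) a v (hl tau v a).
Proof.
  intros ha hv. destruct (bnd_lam tau a v) as [I [HI _]]; try lra.
  unfold hl. rewrite (@is_RInt_unique C_R_CompleteNormedModule (FF tau) a v I HI). exact HI.
Qed.

Lemma hl_step tau v u w eps : 0 < u -> u <= w -> w < v -> v < Rabs tau ->
  2 * sqrt w < eps ->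
  @ball (NormedModule.UniformSpace _ C_R_NormedModule) (hl tau v w) eps (hl tau v u).
Proof.
  intros hu huw hw hv he.
  destruct (bnd_lam tau u w) as [I [HI _]]; try lra.
  assert (H1 := hl_is tau v u ltac:(lra) hv).
  assert (H2 := hl_is tau v w ltac:(lra) hv).
  assert (H3 := is_RInt_Chasles _ _ _ _ _ _ HI H2).
  assert (E : hl tau v u = plus I (hl tau v w)).
  { rewrite <- (@is_RInt_unique C_R_CompleteNormedModule (FF tau) u v _ H3).
    symmetry. apply (@is_RInt_unique C_R_CompleteNormedModule (FF tau) u v _ H1). }
  apply norm_compat1. rewrite E, minus_plus_C, normCR.
  assert (Ht := triv tau u w I hu huw HI).
  assert (0 < sqrt u) by (apply sqrt_pos'; auto). lra.
Qed.

Lemma lam_part tau v : 0 < v -> Rabs tau > v ->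
  exists l : C, is_lambda ((1/2, tau) : C) v l /\
       Cmod l <= Rmin 4 (2 * sqrt v / (Rabs tau - v)).
Proof.
  intros hv hT.
  assert (HC : exists l, filterlim (hl tau v) (at_right 0)
                 (@locally (NormedModule.UniformSpace _ C_R_NormedModule) l)).
  { apply (filterlim_locally_cauchy (U := C_R_CompleteNormedModule) (hl tau v)).
    intros eps.
    assert (Hd : 0 < Rmin v ((eps/2)^2)).
    { apply Rmin_pos; auto. apply pow_lt. destruct eps; simpl; lra. }
    exists (fun a => 0 < a < Rmin v ((eps/2)^2)). split.
    - apply ev_right; auto.
    - assert (Hs : forall w, 0 < w < Rmin v ((eps/2)^2) -> 2 * sqrt w < eps).
      { intros w Hw. 
        assert (sqrt w < sqrt ((eps/2)^2)).
        { apply sqrt_lt_1; try lra. apply pow_le. destruct eps; simpl; lra.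
          assert (Rmin v ((eps/2)^2) <= (eps/2)^2) by apply Rmin_r. lra. }
        rewrite sqrt_pow2 in H by (destruct eps; simpl; lra). lra. }
      assert (Hmv : forall w, 0 < w < Rmin v ((eps/2)^2) -> w < v).
      { intros w Hw. assert (Rmin v ((eps/2)^2) <= v) by apply Rmin_l. lra. }
      intros u w Hu Hw.
      destruct (Rle_or_lt u w).
      + apply ball_sym. apply hl_step; try lra; auto.
      + apply hl_step; try lra; auto. }
  destruct HC as [l Hl].
  exists l. split.
  - unfold is_lambda. apply (gen_left tau v l (hl tau v)); [|exact Hl].
    apply (filter_imp (fun a => 0 < a < v)); [|apply ev_right; auto].
    intros a Ha. apply hl_is; lra.
  - apply Rmin_glb.
    + apply (lim_bound (at_right 0) (hl tau v) l _ Hl).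
      set (x := sqrt (1 + v) - 1).
      assert (Hx1 : 1 < sqrt (1 + v)).
      { rewrite <- sqrt_1 at 1. apply sqrt_lt_1; lra. }
      assert (Hx2 : sqrt (1 + v) * sqrt (1 + v) = 1 + v) by (apply sqrt_sqrt; lra).
      assert (Hx : 0 < x) by (unfold x; lra).
      assert (Ex : x ^ 2 = v - 2 * x) by (unfold x; nra).
      assert (Sx : sqrt (x ^ 2) = x) by (apply sqrt_pow2; lra).
      assert (Hv1 : sqrt v < sqrt (1 + v)) by (apply sqrt_lt_1; lra).
      apply (filter_imp (fun a => 0 < a < x ^ 2)); [|apply ev_right; nra].
      intros a Ha.
      destruct (bnd_lam tau a (x^2)) as [I1 [HI1 HB1]]; try lra.
      assert (HI2 : ex_RInt (V := C_R_CompleteNormedModule) (FF tau) (x^2) v).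
      { destruct (bnd_lam tau (x^2) v) as [I [HI _]]; try lra. exists I; exact HI. }
      destruct HI2 as [I2 HI2].
      assert (HB2 := triv tau (x^2) v I2 ltac:(lra) ltac:(lra) HI2).
      assert (H3 := is_RInt_Chasles _ _ _ _ _ _ HI1 HI2).
      unfold hl. rewrite (@is_RInt_unique C_R_CompleteNormedModule (FF tau) a v _ H3).
      eapply Rle_trans; [apply norm_plus_C|].
      rewrite Sx in HB1, HB2.
      assert (2 * x / (Rabs tau - x ^ 2) <= 1 / 1).
      { apply frac_le; lra. }
      unfold Rdiv in *. rewrite Rinv_1, Rmult_1_r in H.
      assert (x = sqrt (1 + v) - 1) by reflexivity. lra.
    + apply (lim_bound (at_right 0) (hl tau v) l _ Hl).
      apply (filter_imp (fun a => 0 < a < v)); [|apply ev_right; auto].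
      intros a Ha. destruct (bnd_lam tau a v) as [I [HI HB]]; try lra.
      unfold hl. rewrite (@is_RInt_unique C_R_CompleteNormedModule (FF tau) a v I HI). exact HB.
Qed.

Definition hL tau v b := @RInt C_R_CompleteNormedModule (FF tau) v b.

Lemma hL_is tau v b : Rabs tau < v -> v <= b ->
  is_RInt (V := C_R_NormedModule) (FF tau) v b (hL tau v b).
Proof.
  intros hv hb. destruct (bnd_Lam tau v b) as [I [HI _]]; try lra.
  unfold hL. rewrite (@is_RInt_unique C_R_CompleteNormedModule (FF tau) v b I HI). exact HI.
Qed.

Lemma frac_lt x D e : 0 < D -> x < e * D -> x / D < e.
Proof.
  intros hD h. replace e with ((e * D) / D) by (field; lra).
  unfold Rdiv. apply Rmult_lt_compat_r; auto. apply Rinv_0_lt_compat; auto.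
Qed.

Lemma hL_step tau v X Y (eps : posreal) : Rabs tau < v -> 2 * v + (4 / eps) ^ 2 < X -> X <= Y ->
  @ball (NormedModule.UniformSpace _ C_R_NormedModule) (hL tau v X) eps (hL tau v Y).
Proof.
  intros hv hX hXY.
  assert (T0 := Rabs_pos tau).
  assert (Hk : 0 < 4 / eps) by (destruct eps; simpl; unfold Rdiv; apply Rmult_lt_0_compat; [lra|apply Rinv_0_lt_compat; lra]).
  assert (Hk2 : 4 / eps * eps = 4) by (destruct eps; simpl; field; lra).
  destruct (bnd_Lam tau X Y) as [I [HI HB]]; try nra.
  assert (H1 := hL_is tau v X hv ltac:(nra)).
  assert (H2 := hL_is tau v Y hv ltac:(nra)).
  assert (H3 := is_RInt_Chasles _ _ _ _ _ _ H1 HI).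
  assert (E : hL tau v Y = plus (hL tau v X) I).
  { exact (@is_RInt_unique C_R_CompleteNormedModule (FF tau) v Y _ H3). }
  apply norm_compat1. rewrite E, minus_plus_C', normCR.
  eapply Rle_lt_trans; [exact HB|].
  assert (X0 : 0 < X) by nra.
  assert (Hs := sqrt_pos' X X0). assert (Es := sqrt_sqrt X ltac:(lra)).
  set (k := 4 / eps) in *. set (e := pos eps) in *. clearbody k e.
  set (s := sqrt X) in *. clearbody s. subst X.
  assert (Hsk : k < s) by nra.
  apply frac_lt; [nra|].
  nra.
Qed.

Lemma ev_inf M : Rbar_locally p_infty (fun X => M < X).
Proof. exists M. auto. Qed.

Lemma Lam_part tau v : 0 < v -> Rabs tau < v ->
  exists l : C, is_Lambda ((1/2, tau) : C) v l /\
       Cmod l <= Rmin 4 (2 * sqrt v / (v - Rabs tau)).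
Proof.
  intros hv hT. assert (T0 := Rabs_pos tau).
  assert (HC : exists l, filterlim (hL tau v) (Rbar_locally p_infty)
                 (@locally (NormedModule.UniformSpace _ C_R_NormedModule) l)).
  { apply (filterlim_locally_cauchy (U := C_R_CompleteNormedModule) (hL tau v)).
    intros eps.
    exists (fun X => 2 * v + (4 / eps) ^ 2 < X). split.
    - apply ev_inf.
    - intros u w Hu Hw.
      destruct (Rle_or_lt u w).
      + apply hL_step; auto.
      + apply ball_sym. apply hL_step; auto; lra. }
  destruct HC as [l Hl].
  exists l. split.
  - unfold is_Lambda. apply (gen_right tau v l (hL tau v)); [|exact Hl].
    apply (filter_imp (fun X => v < X)); [|apply ev_inf].
    intros X HX. apply hL_is; lra.
  - apply Rmin_glb.
    + apply (lim_bound (Rbar_locally p_infty) (hL tau v) l _ Hl).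
      set (c := (sqrt v + 1) ^ 2).
      assert (Hs := sqrt_pos' v hv). assert (Es := sqrt_sqrt v ltac:(lra)).
      assert (Sc : sqrt c = sqrt v + 1) by (apply sqrt_pow2; lra).
      assert (Ec : c = v + 2 * sqrt v + 1) by (unfold c; nra).
      apply (filter_imp (fun X => c < X)); [|apply ev_inf].
      intros X HX.
      destruct (bnd_Lam tau c X) as [I2 [HI2 HB2]]; try lra.
      destruct (bnd_Lam tau v c) as [I1 [HI1 _]]; try lra.
      assert (HB1 := triv tau v c I1 hv ltac:(lra) HI1).
      assert (H3 := is_RInt_Chasles _ _ _ _ _ _ HI1 HI2).
      unfold hL. rewrite (@is_RInt_unique C_R_CompleteNormedModule (FF tau) v X _ H3).
      eapply Rle_trans; [apply norm_plus_C|].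
      rewrite Sc in HB1, HB2.
      assert (2 * (sqrt v + 1) / (c - Rabs tau) <= 2 / 1).
      { apply frac_le; lra. }
      unfold Rdiv in *. rewrite Rinv_1, Rmult_1_r in H. lra.
    + apply (lim_bound (Rbar_locally p_infty) (hL tau v) l _ Hl).
      apply (filter_imp (fun X => v < X)); [|apply ev_inf].
      intros X HX. destruct (bnd_Lam tau v X) as [I [HI HB]]; try lra.
      unfold hL. rewrite (@is_RInt_unique C_R_CompleteNormedModule (FF tau) v X I HI). exact HB.
Qed.

Theorem proposition8 (v tau : R) (hv : 0 < v) :
  (Rabs tau > v ->
     exists l : C, is_lambda ((1/2, tau) : C) v l /\
       Cmod l <= Rmin 4 (2 * sqrt v / (Rabs tau - v))) /\
  (Rabs tau < v ->
     exists l : C, is_Lambda ((1/2, tau) : C) v l /\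
       Cmod l <= Rmin 4 (2 * sqrt v / (v - Rabs tau))).
Proof.
  split; intros H; [apply lam_part | apply Lam_part]; auto.
Qed.
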